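(* Let $c=\cos\gamma$, $s=\sin\gamma$ with $\gamma\in(0,2\pi)$, $\gamma\ne\pi/2,\pi,3\pi/2$. Suppose the initial coin state $\nu_0|0\rangle_C+\nu_1|1\rangle_C$ of the generalized alternate quantum walk satisfies \begin{equation*} |\nu_0|^2=|\nu_1|^2,\qquad \nu_0\nu_1^*+\nu_0^*\nu_1=0, \end{equation*} and the initial coin state $q_0|0\rangle_{C'}+q_1|1\rangle_{C'}+q_2|2\rangle_{C'}+q_3|3\rangle_{C'}$ of the generalized Grover walk satisfies \begin{equation*} q_0=q_3=(-1)^\xi\frac{|cs|}{\sqrt{2}\,s},\qquad q_1=q_2=-(-1)^\xi\frac{s}{\sqrt{2}}, \end{equation*} with $\xi\in\{0,1\}$, and the walker starts at the origin $(0,0)$ in both walks. Then the generalized alternate quantum walk and the generalized Grover walk have the same spatial probability distribution (probability of the walker being at $(x,y)$, obtained by tracing out the coin) at every time $t$.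
   Context: Walker space is spanned by $\{|x,y\rangle\}$, $x,y\in\mathbb{Z}$. Generalized Grover walk: four-dimensional coin with basis $|0\rangle_{C'},|1\rangle_{C'},|2\rangle_{C'},|3\rangle_{C'}$ corresponding to moves left-down, left-up, right-down, right-up, i.e. $(x,y)\to(x-1,y-1),(x-1,y+1),(x+1,y-1),(x+1,y+1)$; one time step consists of applying the coin operation \begin{equation*} \hat{A}=\begin{pmatrix} -c^2&|cs|&|cs|&s^2\\ |cs|&-s^2&c^2&|cs|\\ |cs|&c^2&-s^2&|cs|\\ s^2&|cs|&|cs|&-c^2 \end{pmatrix} \end{equation*} followed by the conditional move. Generalized alternate quantum walk: two-dimensional coin with basis $|0\rangle_C,|1\rangle_C$, coin operation $\hat{U}=\begin{pmatrix}c&s\\ s&-c\end{pmatrix}$, and conditional shifts $\hat{S}_x=\sum_{i,j}|i-1,j,0\rangle\langle i,j,0|+\sum_{i,j}|i+1,j,1\rangle\langle i,j,1|$ and $\hat{S}_y=\sum_{i,j}|i,j-1,0\rangle\langle i,j,0|+\sum_{i,j}|i,j+1,1\rangle\langle i,j,1|$; one time step consists of $\hat{U}$, then $\hat{S}_x$, then $\hat{U}$, then $\hat{S}_y$. For $\gamma=\pi/4$ these reduce (up to conventions) to the Hadamard coin and the standard Grover coin. *)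

(* Defs.v *)
From mathcomp Require Import all_boot all_order all_algebra.
From mathcomp Require Import complex.
From mathcomp Require Import reals trigo.
Set Implicit Arguments. Unset Strict Implicit. Unset Printing Implicit Defensive.
Import Order.TTheory GRing.Theory Num.Theory.
Local Open Scope ring_scope.
Local Open Scope complex_scope.

Section Walks.
Variable R : realType.
Notation C := (complex R).

Definition state (k : nat) := int -> int -> 'I_k -> C.

Definition rc (r : R) : C := r%:C.

Definition Ucoin (g : R) (i j : 'I_2) : C :=
  let c := cos g in let s := sin g in
  rc (match nat_of_ord i, nat_of_ord j with
      | O, O => c | O, _ => s | _, O => s | _, _ => - c end).

Definition apply_coin k (M : 'I_k -> 'I_k -> C) (psi : state k) : state k :=
  fun x y i => \sum_(j < k) M i j * psi x y j.

(* S_x : |x,y,0> -> |x-1,y,0>, |x,y,1> -> |x+1,y,1> *)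
Definition shiftX (psi : state 2) : state 2 :=
  fun x y i => if val i == 0%N then psi (x + 1) y i else psi (x - 1) y i.
(* S_y : |x,y,0> -> |x,y-1,0>, |x,y,1> -> |x,y+1,1> *)
Definition shiftY (psi : state 2) : state 2 :=
  fun x y i => if val i == 0%N then psi x (y + 1) i else psi x (y - 1) i.

Definition alt_step (g : R) (psi : state 2) : state 2 :=
  shiftY (apply_coin (Ucoin g) (shiftX (apply_coin (Ucoin g) psi))).

Definition Acoin (g : R) (i j : 'I_4) : C :=
  let c := cos g in let s := sin g in let cs := `|c * s| in
  rc (match nat_of_ord i, nat_of_ord j with
      | O, O => - c ^+ 2 | O, S O => cs | O, S (S O) => cs | O, _ => s ^+ 2
      | S O, O => cs | S O, S O => - s ^+ 2 | S O, S (S O) => c ^+ 2 | S O, _ => cs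
      | S (S O), O => cs | S (S O), S O => c ^+ 2 | S (S O), S (S O) => - s ^+ 2
      | S (S O), _ => cs
      | _, O => s ^+ 2 | _, S O => cs | _, S (S O) => cs | _, _ => - c ^+ 2 end).

(* conditional move: coin 0 : (x,y)->(x-1,y-1), 1 : (x-1,y+1),
   2 : (x+1,y-1), 3 : (x+1,y+1) *)
Definition grover_shift (psi : state 4) : state 4 :=
  fun x y i => match nat_of_ord i with
               | O => psi (x + 1) (y + 1) i
               | S O => psi (x + 1) (y - 1) i
               | S (S O) => psi (x - 1) (y + 1) i
               | _ => psi (x - 1) (y - 1) i end.

Definition grover_step (g : R) (psi : state 4) : state 4 :=
  grover_shift (apply_coin (Acoin g) psi).

Definition init_state k (a : 'I_k -> C) : state k :=
  fun x y i => if (x == 0) && (y == 0) then a i else 0.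

Definition prob k (psi : state k) (x y : int) : C :=
  \sum_(i < k) `|psi x y i| ^+ 2.

End Walks.

(* Main.v *)
Require Import Defs.
From mathcomp Require Import all_boot all_order all_algebra.
From mathcomp Require Import complex.
From mathcomp Require Import reals trigo.
From mathcomp Require Import ring lra.
From Stdlib Require Import FunctionalExtensionality.
Import Order.TTheory GRing.Theory Num.Theory.
Local Open Scope ring_scope.
Local Open Scope complex_scope.
Set Implicit Arguments. Unset Strict Implicit. Unset Printing Implicit Defensive.

Definition i0 : 'I_4 := @Ordinal 4 0 isT.
Definition i1 : 'I_4 := @Ordinal 4 1 isT.
Definition i2 : 'I_4 := @Ordinal 4 2 isT.
Definition i3 : 'I_4 := @Ordinal 4 3 isT.
Definition j0 : 'I_2 := ord0.
Definition j1 : 'I_2 := lift ord0 ord0.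

Lemma sum4 (C : nmodType) (f : 'I_4 -> C) : \sum_(j < 4) f j = f i0 + f i1 + f i2 + f i3.
Proof.
rewrite !big_ord_recl big_ord0 addr0 !addrA.
by congr (_ + _ + _ + _); congr f; apply: val_inj.
Qed.

Lemma sum2 (C : nmodType) (f : 'I_2 -> C) : \sum_(j < 2) f j = f j0 + f j1.
Proof. by rewrite !big_ord_recl big_ord0 addr0. Qed.

Definition sgr (R : realType) (g : R) : R := if 0 <= cos g * sin g then 1 else -1.
Definition cC (R : realType) (g : R) : complex R := (cos g)%:C.
Definition sC (R : realType) (g : R) : complex R := (sin g)%:C.
Definition sgC (R : realType) (g : R) : complex R := (sgr g)%:C.

Lemma normcs (R : realType) (g : R) : `|cos g * sin g| = sgr g * (cos g * sin g).
Proof.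
rewrite /sgr; case: ifP => h; first by rewrite ger0_norm // mul1r.
by rewrite ltr0_norm ?mulN1r // ltNge h.
Qed.

Lemma sgr2 (R : realType) (g : R) : sgr g ^+ 2 = 1.
Proof. by rewrite /sgr; case: ifP => _; rewrite ?expr1n ?sqrrN ?expr1n. Qed.

Lemma sgC2 (R : realType) (g : R) : sgC g ^+ 2 = 1.
Proof. by rewrite /sgC -rmorphXn sgr2 rmorph1. Qed.

Lemma cs1 (R : realType) (g : R) : cC g ^+ 2 = 1 - sC g ^+ 2.
Proof. by rewrite /cC /sC -!rmorphXn -rmorphB -(cos2Dsin2 g) addrK. Qed.

Lemma kC (R : realType) (g : R) : rc `|cos g * sin g| = sgC g * cC g * sC g.
Proof. by rewrite /rc normcs !rmorphM mulrA. Qed.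

Lemma gs0 (R : realType) g (p : state R 4) x y :
  grover_step g p x y i0 =
  - cC g ^+ 2 * p (x+1) (y+1) i0 + sgC g * cC g * sC g * p (x+1) (y+1) i1
  + sgC g * cC g * sC g * p (x+1) (y+1) i2 + sC g ^+ 2 * p (x+1) (y+1) i3.
Proof.
rewrite /grover_step /grover_shift /= /apply_coin sum4 /Acoin /= !kC.
by rewrite /rc /cC /sC !rmorphN !rmorphXn.
Qed.

Lemma gs1 (R : realType) g (p : state R 4) x y :
  grover_step g p x y i1 =
  sgC g * cC g * sC g * p (x+1) (y-1) i0 - sC g ^+ 2 * p (x+1) (y-1) i1
  + cC g ^+ 2 * p (x+1) (y-1) i2 + sgC g * cC g * sC g * p (x+1) (y-1) i3.
Proof.
rewrite /grover_step /grover_shift /= /apply_coin sum4 /Acoin /= !kC.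
by rewrite /rc /cC /sC !rmorphN !rmorphXn mulNr.
Qed.

Lemma gs2 (R : realType) g (p : state R 4) x y :
  grover_step g p x y i2 =
  sgC g * cC g * sC g * p (x-1) (y+1) i0 + cC g ^+ 2 * p (x-1) (y+1) i1
  - sC g ^+ 2 * p (x-1) (y+1) i2 + sgC g * cC g * sC g * p (x-1) (y+1) i3.
Proof.
rewrite /grover_step /grover_shift /= /apply_coin sum4 /Acoin /= !kC.
by rewrite /rc /cC /sC !rmorphN !rmorphXn mulNr.
Qed.

Lemma gs3 (R : realType) g (p : state R 4) x y :
  grover_step g p x y i3 =
  sC g ^+ 2 * p (x-1) (y-1) i0 + sgC g * cC g * sC g * p (x-1) (y-1) i1
  + sgC g * cC g * sC g * p (x-1) (y-1) i2 - cC g ^+ 2 * p (x-1) (y-1) i3.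
Proof.
rewrite /grover_step /grover_shift /= /apply_coin sum4 /Acoin /= !kC.
by rewrite /rc /cC /sC !rmorphN !rmorphXn mulNr.
Qed.

Lemma as0 (R : realType) g (p : state R 2) x y :
  alt_step g p x y j0 =
  cC g * (cC g * p (x+1) (y+1) j0 + sC g * p (x+1) (y+1) j1)
  + sC g * (sC g * p (x-1) (y+1) j0 - cC g * p (x-1) (y+1) j1).
Proof.
rewrite /alt_step /shiftY /= /apply_coin sum2 /shiftX /= !sum2 /Ucoin /=.
by rewrite /rc /cC /sC !rmorphN mulNr.
Qed.

Lemma as1 (R : realType) g (p : state R 2) x y :
  alt_step g p x y j1 =
  sC g * (cC g * p (x+1) (y-1) j0 + sC g * p (x+1) (y-1) j1)
  - cC g * (sC g * p (x-1) (y-1) j0 - cC g * p (x-1) (y-1) j1).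
Proof.
rewrite /alt_step /shiftY /= /apply_coin sum2 /shiftX /= !sum2 /Ucoin /=.
by rewrite /rc /cC /sC !rmorphN !mulNr.
Qed.

Definition Lp (R : realType) (g : R) (p : state R 4) x y : complex R :=
  sC g * p (x-1) y i0 + sgC g * cC g * p (x-1) y i1
  + sgC g * cC g * p (x+1) y i2 + sC g * p (x+1) y i3.
Definition Kp (R : realType) (g : R) (p : state R 4) x y : complex R :=
  sC g * p x (y-1) i0 + sgC g * cC g * p x (y-1) i2
  + sgC g * cC g * p x (y+1) i1 + sC g * p x (y+1) i3.

Lemma KL1 (R : realType) g (p : state R 4) x y :
  Kp g (grover_step g p) x y = Lp g p x y.
Proof.
rewrite /Kp /Lp gs0 gs1 gs2 gs3 !subrK !addrK.
have h1 := cs1 g; have h2 := sgC2 g.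
ring: h1 h2.
Qed.

Lemma KL2 (R : realType) g (p : state R 4) x y :
  Lp g (grover_step g p) x y = Kp g p x y.
Proof.
rewrite /Kp /Lp gs0 gs1 gs2 gs3 !subrK !addrK.
have h1 := cs1 g; have h2 := sgC2 g.
ring: h1 h2.
Qed.

Definition Zs (R : realType) (g : R) (b0 b1 e : complex R) (p : state R 4) : state R 2 :=
  fun x y i => if val i == 0%N then e * (b0 * p x y i0 - sgC g * b1 * p x y i2)
               else e * (- sgC g * b0 * p x y i1 - b1 * p x y i3).

Lemma ord2P (i : 'I_2) : i = j0 \/ i = j1.
Proof.
case: i => [[|[|n]] h]; [left|right|by []]; exact: val_inj.
Qed.

Lemma altZ (R : realType) g (b0 b1 e : complex R) (p : state R 4) :
  (forall x y, Lp g p x y = 0) ->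
  alt_step g (Zs g b0 b1 e p) = Zs g b0 b1 (- e) (grover_step g p).
Proof.
move=> hL; apply: functional_extensionality => x.
apply: functional_extensionality => y.
apply: functional_extensionality => i.
have h2 := sgC2 g.
case: (ord2P i) => ->.
- rewrite as0 /Zs /= gs0 gs2.
  apply/eqP; rewrite -subr_eq0; apply/eqP.
  transitivity (e * (b0 * sC g - b1 * cC g) * Lp g p x (y + 1)).
    rewrite /Lp; ring: h2.
  by rewrite hL mulr0.
- rewrite as1 /Zs /= gs1 gs3.
  apply/eqP; rewrite -subr_eq0; apply/eqP.
  transitivity (- e * (b0 * cC g + b1 * sC g) * Lp g p x (y - 1)).
    rewrite /Lp; ring: h2.
  by rewrite hL mulr0.
Qed.

Lemma probZ_alg (R : realType) (b0 b1 e sg P0 P1 P2 P3 : complex R) :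
  e * e^* = 1 -> b0 * b0^* = 1 -> b1 * b1^* = 1 -> b0 * b1^* = - (b0^* * b1) ->
  sg ^+ 2 = 1 ->
  e * (b0 * P0 - sg * b1 * P2) * (e^* * (b0^* * P0 - sg * b1^* * P2)) +
  e * (- sg * b0 * P1 - b1 * P3) * (e^* * (- sg * b0^* * P1 - b1^* * P3)) =
  P0 * P0 + P1 * P1 + P2 * P2 + P3 * P3.
Proof. move=> he h0 h1 h01 h2.
have -> : e * (b0 * P0 - sg * b1 * P2) * (e^* * (b0^* * P0 - sg * b1^* * P2)) +
  e * (- sg * b0 * P1 - b1 * P3) * (e^* * (- sg * b0^* * P1 - b1^* * P3)) =
  (e * e^*) * ((b0 * b0^*) * (P0 * P0 + sg^+2 * P1 * P1) + (b1 * b1^*) * (sg^+2 * P2*P2 + P3 * P3)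
   - sg * (b0 * b1^* + b0^* * b1) * (P0 * P2 - P1 * P3)) by ring.
rewrite he h0 h1 h01 h2 addNr; ring.
Qed.

Lemma probZ (R : realType) g (b0 b1 e : complex R) (p : state R 4) x y :
  e * e^* = 1 -> b0 * b0^* = 1 -> b1 * b1^* = 1 -> b0 * b1^* = - (b0^* * b1) ->
  (forall i, (p x y i)^* = p x y i) ->
  prob (Zs g b0 b1 e p) x y = prob p x y.
Proof.
move=> he h0 h1 h01 hp.
rewrite /prob sum2 sum4 !sqr_normc /Zs /=.
rewrite !(rmorphM, rmorphB, rmorphN).
have cE : forall z : complex R, complex_conjc__canonical__GRing_RMorphism R z = z^* by [].
rewrite !cE !hp /sgC conjc_real.
exact: probZ_alg (sgC2 g).
Qed.

Lemma ord4P (i : 'I_4) : [\/ i = i0, i = i1, i = i2 | i = i3].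
Proof.
case: i => [[|[|[|[|n]]]] h]; [apply: Or41|apply: Or42|apply: Or43|apply: Or44|by []];
  exact: val_inj.
Qed.

Lemma cEq (R : realType) (z : complex R) :
  complex_conjc__canonical__GRing_RMorphism R z = z^*.
Proof. by []. Qed.

Lemma gs_real (R : realType) g (p : state R 4) :
  (forall x y i, (p x y i)^* = p x y i) ->
  forall x y i, (grover_step g p x y i)^* = grover_step g p x y i.
Proof.
move=> hp x y i; case: (ord4P i) => ->;
  rewrite ?gs0 ?gs1 ?gs2 ?gs3 !(rmorphD, rmorphB, rmorphM, rmorphN, rmorphXn) !cEq !hp
     /cC /sC /sgC !conjc_real.
all: by [].
Qed.

Lemma sin_neq0 (R : realType) (g : R) : 0 < g < 2 * pi -> g != pi -> sin g != 0.
Proof.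
move=> /andP[g0 g2] gp.
have pi0 := pi_gt0 R.
case: (ltrgtP g pi) => h.
- by rewrite gt_eqF // sin_gt0_pi // g0 h.
- have -> : g = (g - pi) + pi by rewrite subrK.
  rewrite sinDpi oppr_eq0 gt_eqF // sin_gt0_pi //.
  apply/andP; split; lra.
- by rewrite h eqxx in gp.
Qed.

Lemma KL_init (R : realType) g (q : 'I_4 -> complex R) :
  sC g * q i0 + sgC g * cC g * q i2 = 0 ->
  sgC g * cC g * q i1 + sC g * q i3 = 0 ->
  sC g * q i0 + sgC g * cC g * q i1 = 0 ->
  sgC g * cC g * q i2 + sC g * q i3 = 0 ->
  forall x y, Kp g (init_state q) x y = 0 /\ Lp g (init_state q) x y = 0.
Proof.
move=> h1 h2 h3 h4 x y; split.
- rewrite /Kp /init_state.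
  case: ((x == 0) && (y - 1 == 0)); case: ((x == 0) && (y + 1 == 0));
    rewrite ?mulr0 ?addr0 ?add0r //;
    first [ by rewrite h1 | by rewrite h2 | by rewrite -addrA h2 addr0 h1 ].
- rewrite /Lp /init_state.
  case: ((x - 1 == 0) && (y == 0)); case: ((x + 1 == 0) && (y == 0));
    rewrite ?mulr0 ?addr0 ?add0r //;
    first [ by rewrite h3 | by rewrite h4 | by rewrite -addrA h4 addr0 h3 ].
Qed.

Lemma KL_all (R : realType) g (q : 'I_4 -> complex R) :
  (forall x y, Kp g (init_state q) x y = 0 /\ Lp g (init_state q) x y = 0) ->
  forall t x y, Kp g (iter t (grover_step g) (init_state q)) x y = 0 /\
                Lp g (iter t (grover_step g) (init_state q)) x y = 0.
Proof.
move=> h0; elim=> [|t IH] x y //=.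
by rewrite KL1 KL2; case: (IH x y).
Qed.

Lemma real_all (R : realType) g (q : 'I_4 -> complex R) :
  (forall i, (q i)^* = q i) ->
  forall t x y i, (iter t (grover_step g) (init_state q) x y i)^* =
                  iter t (grover_step g) (init_state q) x y i.
Proof.
move=> hq; elim=> [|t IH] x y i /=.
- by rewrite /init_state; case: ifP => _; rewrite ?conjc0.
- exact: gs_real.
Qed.

Lemma P_Z (R : realType) g (nu : 'I_2 -> complex R) (q : 'I_4 -> complex R) b0 b1 :
  init_state nu = Zs g b0 b1 1 (init_state q) ->
  (forall t x y, Lp g (iter t (grover_step g) (init_state q)) x y = 0) ->
  forall t, iter t (alt_step g) (init_state nu) =
            Zs g b0 b1 ((-1) ^+ t) (iter t (grover_step g) (init_state q)).
Proof.
move=> h0 hL; elim=> [|t IH] /=; first by rewrite expr0.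
by rewrite IH altZ // exprS mulN1r.
Qed.

Theorem theorem2 (R : realType) (g : R) (nu : 'I_2 -> complex R)
    (q : 'I_4 -> complex R) (xi : bool) :
  0 < g < 2 * pi ->
  g != pi / 2 -> g != pi -> g != 3 * pi / 2 ->
  `|nu ord0| ^+ 2 + `|nu (lift ord0 ord0)| ^+ 2 = 1 ->
  `|nu ord0| ^+ 2 = `|nu (lift ord0 ord0)| ^+ 2 ->
  nu ord0 * (nu (lift ord0 ord0))^* + (nu ord0)^* * nu (lift ord0 ord0) = 0 ->
  (forall i : 'I_4, (val i == 0%N) || (val i == 3%N) ->
     q i = ((-1) ^+ xi * `|cos g * sin g| / (Num.sqrt 2 * sin g))%:C) ->
  (forall i : 'I_4, (val i == 1%N) || (val i == 2%N) ->
     q i = (- ((-1) ^+ xi * sin g / Num.sqrt 2))%:C) ->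
  forall (t : nat) (x y : int),
    prob (iter t (alt_step g) (init_state nu)) x y =
    prob (iter t (grover_step g) (init_state q)) x y.
Proof.
move=> hg _ gpi _ hn1 hn2 hn3 hq03 hq12 t x y.
have sn0 := sin_neq0 hg gpi.
have r2n0 : Num.sqrt 2 != 0 :> R by rewrite gt_eqF // sqrtr_gt0 ltr0n.
set tr : R := (-1) ^+ xi.
set tC : complex R := tr%:C.
set r2 : complex R := (Num.sqrt 2)%:C.
have r2C0 : r2 != 0 by rewrite /r2 fmorph_eq0.
have r2sq : r2 ^+ 2 = 2 by rewrite /r2 -rmorphXn sqr_sqrtr ?ler0n // rmorph_nat.
have t2 : tC ^+ 2 = 1 by rewrite /tC -rmorphXn /tr sqrr_sign rmorph1.
have s2 := sgC2 g.
have c2 := cs1 g.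
have q0E : forall i, (val i == 0%N) || (val i == 3%N) -> q i = tC * sgC g * cC g / r2.
  move=> i hi; rewrite hq03 // normcs.
  have -> : tr * (sgr g * (cos g * sin g)) / (Num.sqrt 2 * sin g) =
            tr * sgr g * cos g / Num.sqrt 2 by field; rewrite sn0 r2n0.
  by rewrite !rmorphM fmorphV.
have q1E : forall i, (val i == 1%N) || (val i == 2%N) -> q i = - (tC * sC g / r2).
  by move=> i hi; rewrite hq12 // rmorphN !rmorphM fmorphV.
have hq0 := q0E i0 isT; have hq3 := q0E i3 isT.
have hq1 := q1E i1 isT; have hq2 := q1E i2 isT.
have hKL := KL_all (KL_init (g := g) (q := q) _ _ _ _).
have {hKL} hKL : forall t x y, Lp g (iter t (grover_step g) (init_state q)) x y = 0.
  by move=> t' x' y'; apply: (proj2 (hKL _ _ _ _ t' x' y'));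
    rewrite ?hq0 ?hq1 ?hq2 ?hq3; ring.
set b0 := r2 * tC * sgC g * (cC g * nu j0 + sC g * nu j1).
set b1 := r2 * tC * sgC g * (sC g * nu j0 - cC g * nu j1).
have hbase : init_state nu = Zs g b0 b1 1 (init_state q).
  apply: functional_extensionality => x'.
  apply: functional_extensionality => y'.
  apply: functional_extensionality => i.
  rewrite /init_state /Zs; case: (ord2P i) => -> /=; case: ifP => _.
  - rewrite hq0 hq2 /b0 /b1; field: t2 s2 c2; exact: r2C0.
  - by rewrite !mulr0 subrr mulr0.
  - rewrite hq1 hq3 /b0 /b1; field: t2 s2 c2; exact: r2C0.
  - by rewrite !mulr0 subrr mulr0.
have hA : nu j1 * (nu j1)^* = nu j0 * (nu j0)^*.
  by rewrite -!sqr_normc; exact/esym/hn2.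
have h1' : nu j0 * (nu j0)^* + nu j1 * (nu j1)^* = 1.
  by rewrite -!sqr_normc; exact: hn1.
have hX : nu j0 * (nu j1)^* + (nu j0)^* * nu j1 = 0 by exact: hn3.
have r2c : r2^* = r2 by rewrite /r2 conjc_real.
have tCc : tC^* = tC by rewrite /tC conjc_real.
have sgc : (sgC g)^* = sgC g by rewrite /sgC conjc_real.
have cc : (cC g)^* = cC g by rewrite /cC conjc_real.
have sc : (sC g)^* = sC g by rewrite /sC conjc_real.
have b0c : b0^* = r2 * tC * sgC g * (cC g * (nu j0)^* + sC g * (nu j1)^*).
  rewrite /b0 !(rmorphM, rmorphD, rmorphB, rmorphN) !cEq ?r2c ?tCc ?sgc ?cc ?sc; reflexivity.
have b1c : b1^* = r2 * tC * sgC g * (sC g * (nu j0)^* - cC g * (nu j1)^*).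
  rewrite /b1 !(rmorphM, rmorphD, rmorphB, rmorphN) !cEq ?r2c ?tCc ?sgc ?cc ?sc; reflexivity.
rewrite (P_Z hbase hKL) probZ //.
- by rewrite rmorphXn rmorphN1 -exprMn mulrNN mulr1 expr1n.
- rewrite -h1'.
  transitivity (b0 * (r2 * tC * sgC g * (cC g * (nu j0)^* + sC g * (nu j1)^*))).
    by congr (_ * _); exact: b0c.
  have -> : b0 * (r2 * tC * sgC g * (cC g * (nu j0)^* + sC g * (nu j1)^*)) =
    r2^+2 * tC^+2 * sgC g^+2 * ((cC g^+2 + sC g^+2) * (nu j0 * (nu j0)^*)
      + cC g * sC g * (nu j0 * (nu j1)^* + (nu j0)^* * nu j1)
      + sC g^+2 * (nu j1 * (nu j1)^* - nu j0 * (nu j0)^*)) by rewrite /b0; ring.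
  rewrite r2sq t2 s2 c2 subrK hX hA subrr; ring.
- rewrite -h1'.
  transitivity (b1 * (r2 * tC * sgC g * (sC g * (nu j0)^* - cC g * (nu j1)^*))).
    by congr (_ * _); exact: b1c.
  have -> : b1 * (r2 * tC * sgC g * (sC g * (nu j0)^* - cC g * (nu j1)^*)) =
    r2^+2 * tC^+2 * sgC g^+2 * ((cC g^+2 + sC g^+2) * (nu j0 * (nu j0)^*)
      - cC g * sC g * (nu j0 * (nu j1)^* + (nu j0)^* * nu j1)
      + cC g^+2 * (nu j1 * (nu j1)^* - nu j0 * (nu j0)^*)) by rewrite /b1; ring.
  rewrite r2sq t2 s2 c2 subrK hX hA subrr; ring.
- apply/eqP; rewrite -subr_eq0 opprK; apply/eqP.
  transitivity (b0 * (r2 * tC * sgC g * (sC g * (nu j0)^* - cC g * (nu j1)^*)) +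
            r2 * tC * sgC g * (cC g * (nu j0)^* + sC g * (nu j1)^*) * b1).
    by congr (_ * _ + _ * _); [exact: b1c | exact: b0c].
  have -> : b0 * (r2 * tC * sgC g * (sC g * (nu j0)^* - cC g * (nu j1)^*)) +
            r2 * tC * sgC g * (cC g * (nu j0)^* + sC g * (nu j1)^*) * b1 =
    r2^+2 * tC^+2 * sgC g^+2 * (2 * cC g * sC g * (nu j0 * (nu j0)^* - nu j1 * (nu j1)^*)
      + (sC g^+2 - cC g^+2) * (nu j0 * (nu j1)^* + (nu j0)^* * nu j1)) by rewrite /b0 /b1; ring.
  by rewrite hA subrr hX; ring.
- apply: real_all => i; case: (ord4P i) => ->.
  + by rewrite (hq03 i0 isT) conjc_real.
  + by rewrite (hq12 i1 isT) conjc_real.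
  + by rewrite (hq12 i2 isT) conjc_real.
  + by rewrite (hq03 i3 isT) conjc_real.
Qed.
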